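(* Let $G$ be a simple graph, $r\ge 1$ an integer, and $S$ an independent $r$-incident multiset of vertices of $G$. Then there exist an independent $r$-incident multiset $S'$ of vertices of $G$ and an independent set $A\subseteq V(G)$ such that: (i) $\mathrm{supp}(S')$ contains no two vertices that are twins; (ii) $\mathrm{supp}(S')$ contains no vertex of degree $0$ or $1$; (iii) $S'(u)\in\{0,1,\dots,2^{r-1}-1\}$ for every vertex $u$; and $G\star^r S = G\star^1 A\star^r S'$.
   Context: Graphs are finite, simple and undirected; $N_G(u)$ is the set of neighbours of $u$. Two vertices $u,v$ are twins if $N_G(u)\setminus\{v\}=N_G(v)\setminus\{u\}$. A multiset $S$ of vertices is identified with its multiplicity function $S:V(G)\to\mathbb N$; its support is $\mathrm{supp}(S)=\{u: S(u)\ge 1\}$. A set $D$ of vertices is independent if no two vertices of $D$ are adjacent; a multiset is independent if its support is. For an integer $r\ge1$, a multiset $S$ is $r$-incident if for every $k\in\{0,1,\dots,r-1\}$ and every set $K\subseteq V(G)\setminus\mathrm{supp}(S)$ with $|K|=k+2$, the number $\sum_{u\in\bigcap_{v\in K}N_G(v)}S(u)$ is a multiple of $2^{\,r-k-\delta(k)}$, where $\delta(k)=1$ if $k=0$ and $\delta(k)=0$ otherwise. For an independent $r$-incident multiset $S$, the $r$-local complementation $G\star^r S$ is the graph on $V(G)$ in which distinct vertices $a,b$ are adjacent iff exactly one of the following holds: $a\sim_G b$, or $\sum_{u\in N_G(a)\cap N_G(b)}S(u)\equiv 2^{r-1}\pmod{2^r}$. For $r=1$ and an independent set $A=\{u_1,\dots,u_k\}$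 (viewed as a multiset with multiplicities $1$), $G\star^1 A = G\star u_1\star\cdots\star u_k$, where the local complementation $G\star u$ replaces the subgraph induced on $N_G(u)$ by its complement. *)

(* Defs.v *)
From mathcomp Require Import all_boot.
Set Implicit Arguments. Unset Strict Implicit. Unset Printing Implicit Defensive.

(* A finite simple graph on vertex type T : finType is a symmetric,
   irreflexive relation g : rel T.  A multiset of vertices is S : T -> nat. *)

Section Defs.
Variable T : finType.

Definition neighbors (g : rel T) (u : T) : {set T} := [set v | g u v].

Definition degree (g : rel T) (u : T) : nat := #|neighbors g u|.

Definition twins (g : rel T) (u v : T) : bool :=
  neighbors g u :\ v == neighbors g v :\ u.

Definition supp (S : T -> nat) : {set T} := [set u | 0 < S u].

Definition independent (g : rel T) (D : {set T}) : bool :=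
  [forall u in D, forall v in D, ~~ g u v].

Definition independent_ms (g : rel T) (S : T -> nat) : bool :=
  independent g (supp S).

Definition delta (k : nat) : nat := (k == 0%N).

Definition r_incident (g : rel T) (r : nat) (S : T -> nat) : Prop :=
  forall k : nat, k < r ->
  forall K : {set T}, K \subset ~: supp S -> #|K| = k.+2 ->
    2 ^ (r - k - delta k) %| \sum_(u | [forall v in K, g v u]) S u.

(* r-local complementation G *^r S (given by the formula; meaningful when S
   is independent and r-incident) *)
Definition rlc (g : rel T) (r : nat) (S : T -> nat) : rel T :=
  fun a b => (a != b) &&
    (g a b (+) ((\sum_(u | g a u && g b u) S u) %% 2 ^ r == 2 ^ r.-1)).

Definition lc1 (g : rel T) (u : T) : rel T :=
  fun a b => (a != b) && (g a b (+) (g u a && g u b)).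

Definition lc_set (g : rel T) (A : {set T}) : rel T :=
  foldl lc1 g (enum A).

End Defs.

(* Main.v *)
Require Import Defs.
From mathcomp Require Import all_boot.
From mathcomp Require Import zify.
Set Implicit Arguments. Unset Strict Implicit.

Lemma foldl_lc1 (T : finType) (I : {set T}) (s : seq T) : forall (g : rel T),
  irreflexive g -> (forall u w, u \in I -> w \in I -> g u w = false) ->
  all (mem I) s ->
  forall a b, foldl (@lc1 T) g s a b =
    (g a b (+) odd (count (fun u => g u a && g u b) s)) && (a != b).
Proof.
elim: s => [|x s IH] g irr indep /= Hs a b.
  rewrite addbF; have [->|nab] := eqVneq a b; first by rewrite irr.
  by rewrite andbT.
case/andP: Hs => xI sI.
rewrite IH //; last first.
- move=> u w uI wI; by rewrite /lc1 indep // (indep x u) // andbF.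
- by move=> y; rewrite /lc1 eqxx.
rewrite (@eq_in_count _ _ (fun u => g u a && g u b)); last first.
  move=> u /(allP sI) uI.
  have E : forall c, lc1 g x u c = g u c.
    move=> c; rewrite /lc1 (indep x u) //= addbF.
    case guc: (g u c); rewrite ?andbT ?andbF //.
    by apply: contraTneq guc => ->; rewrite irr.
  by rewrite !E.
rewrite /lc1 oddD; have [->|nab] := eqVneq a b; first by rewrite !andbF.
rewrite !andbT /=.
by rewrite oddb addbA.
Qed.

Section Main.
Variables (T : finType) (g : rel T) (r : nat) (S : T -> nat).
Hypotheses (gsym : symmetric g) (girr : irreflexive g) (r1 : 1 <= r)
  (Sind : independent_ms g S) (Sinc : r_incident g r S).

Local Notation N := (neighbors g).

Lemma indepP u w : u \in supp S -> w \in supp S -> g u w = false.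
Proof.
move=> uS wS; move/forallP: Sind => /(_ u) /implyP /(_ uS) /forallP /(_ w).
by move/implyP/(_ wS)/negbTE.
Qed.

Lemma gN u v : g v u = (v \in N u).
Proof. by rewrite /neighbors inE gsym. Qed.

Definition mm := 2 ^ r.-1.
Lemma mm_gt0 : 0 < mm. Proof. by rewrite expn_gt0. Qed.

Definition pkN (X : {set T}) := [pick v | (v \in supp S) && (N v == X)].
Definition isrep x := (x \in supp S) && (pkN (N x) == Some x).
Definition Tw x := \sum_(v | N v == N x) S v.
Definition good x := isrep x && (1 < degree g x).
Definition S' x := if good x then Tw x %% mm else 0.
Definition A := [set x | good x && odd (Tw x %/ mm)].

Lemma rep_unique u : u \in supp S ->
  exists x0, forall x, (isrep x && (N x == N u)) = (x == x0).
Proof.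
move=> uS; rewrite /isrep.
case E: (pkN (N u)) => [x0|]; last first.
  by move: E; rewrite /pkN; case: pickP => // H _; move: (H u); rewrite uS eqxx.
have [x0S Nx0]: (x0 \in supp S) /\ N x0 = N u.
  by move: E; rewrite /pkN; case: pickP => // y /andP[yS /eqP Ny] [<-].
exists x0 => x; apply/idP/idP.
  by case/andP => /andP[_ Hx] /eqP Nx; move: Hx; rewrite Nx E => /eqP [->].
by move/eqP => ->; rewrite x0S Nx0 E !eqxx.
Qed.

Lemma group (C : pred T) : (forall u w, N u = N w -> C u = C w) ->
  \sum_(u | C u) S u = \sum_(x | C x && isrep x) Tw x.
Proof.
move=> HC.
transitivity (\sum_(u | C u) \sum_(x | isrep x && (N x == N u)) S u).
  apply: eq_bigr => u Cu; case: (posnP (S u)) => [->|Sp]; first by rewrite big1.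
  have uS : u \in supp S by rewrite inE.
  have [x0 Hx0] := rep_unique uS.
  by rewrite (big_pred1 x0).
rewrite (exchange_big_dep isrep) /=; last by move=> u x _ /andP[].
rewrite [RHS](eq_bigl (fun x => isrep x && C x)); last by move=> x; rewrite andbC.
rewrite [RHS]big_mkcondr; apply: eq_bigr => x Rx.
rewrite Rx /=; case Cx: (C x).
  apply: eq_bigl => u; rewrite eq_sym.
  by case e: (N u == N x); rewrite ?andbF // andbT (HC u x (eqP e)).
apply: big1 => u /andP[Cu /eqP e].
by move: Cu; rewrite (HC u x (esym e)) Cx.
Qed.

Lemma S'_sum (C : pred T) : (forall u, C u -> 1 < degree g u) ->
  \sum_(u | C u) S' u = \sum_(x | C x && isrep x) (Tw x %% mm).
Proof.
move=> HC; rewrite big_mkcondr /=; apply: eq_bigr => u Cu.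
by rewrite /S' /good; case: (isrep u) => //=; rewrite HC.
Qed.

Lemma S'_supp u : 0 < S' u -> u \in supp S.
Proof. by rewrite /S' /good /isrep; case: (u \in supp S). Qed.

Lemma sum_supp (P Q : pred T) : (forall u, 0 < S' u -> P u = Q u) ->
  \sum_(u | P u) S' u = \sum_(u | Q u) S' u.
Proof.
move=> H; rewrite big_mkcond [RHS]big_mkcond; apply: eq_bigr => u _.
case: (posnP (S' u)) => [->|h]; first by case: (P u); case: (Q u).
by rewrite (H u h).
Qed.

Lemma L_mod s : mm %| s -> (s %% 2 ^ r == mm) = odd (s %/ mm).
Proof.
move=> /divnK Hs.
have e2 : 2 ^ r = mm * 2 by rewrite /mm -expnSr (prednK r1).
rewrite -{1}Hs e2 mulnC -muln_modr.
rewrite -[X in _ == X](muln1 mm) eqn_pmul2l ?mm_gt0 // modn2.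
by case: odd.
Qed.

Lemma CKe (K : {set T}) u : [forall v in K, g v u] = (K \subset N u).
Proof.
apply/forallP/subsetP => [H v vK | H v]; first by rewrite -gN; move/implyP: (H v); apply.
by apply/implyP => vK; rewrite gN H.
Qed.

Lemma AS x : x \in A -> x \in supp S.
Proof. by rewrite inE /good /isrep => /andP[/andP[/andP[]]]. Qed.

Lemma lcE x y : y \in supp S -> lc_set g A x y = g x y.
Proof.
move=> yS; rewrite /lc_set (@foldl_lc1 _ (supp S)) //; last 2 first.
- exact: indepP.
- by apply/allP => z; rewrite mem_enum => /AS.
rewrite (@eq_in_count _ _ pred0) ?count_pred0 ?addbF; last first.
  by move=> u; rewrite mem_enum => /AS uS; rewrite (indepP uS yS) andbF.
case gxy: (g x y); rewrite ?andbF ?andbT //.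
by apply: contraTneq gxy => ->; rewrite girr.
Qed.

Lemma lcE2 x y : x \in supp S -> lc_set g A x y = g x y.
Proof.
move=> xS; rewrite /lc_set (@foldl_lc1 _ (supp S)) //; last 2 first.
- exact: indepP.
- by apply/allP => z; rewrite mem_enum => /AS.
rewrite (@eq_in_count _ _ pred0) ?count_pred0 ?addbF; last first.
  by move=> u; rewrite mem_enum => /AS uS; rewrite (indepP uS xS).
case gxy: (g x y); rewrite ?andbF ?andbT //.
by apply: contraTneq gxy => ->; rewrite girr.
Qed.

Lemma degK (K : {set T}) u : 2 <= #|K| -> K \subset N u -> 1 < degree g u.
Proof. by move=> h /subset_leq_card; apply: leq_trans. Qed.

Lemma CK_N (K : {set T}) u w : N u = N w -> (K \subset N u) = (K \subset N w).
Proof. by move=> ->. Qed.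

Lemma inc_g : r_incident g r S'.
Proof.
move=> k kr K KS cK.
rewrite (eq_bigl (fun u => K \subset N u)); last by move=> u; exact: CKe.
case: (boolP [exists w in K, w \in supp S]) => [/existsP[w /andP[wK wS]] | H].
  rewrite big1 ?dvdn0 // => u KN; case: (posnP (S' u)) => // h; exfalso.
  have uS := S'_supp h.
  by move: (subsetP KN w wK); rewrite /neighbors inE (indepP uS wS).
have KS0 : K \subset ~: supp S.
  apply/subsetP => w wK; rewrite inE; apply/negP => wS.
  by move/negP: H; apply; apply/existsP; exists w; rewrite wK.
have := Sinc kr KS0 cK.
rewrite (eq_bigl (fun u => K \subset N u)); last by move=> u; exact: CKe.
rewrite group; last by move=> u w; exact: CK_N.
rewrite S'_sum; last by move=> u; apply: degK; rewrite cK.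
have de : 2 ^ (r - k - delta k) %| mm.
  apply: dvdn_exp2l; rewrite /delta; case: k kr {cK} => [|k] kr /=; lia.
rewrite /dvdn => /eqP h; apply/eqP; rewrite -modn_summ.
rewrite (eq_bigr (fun i => Tw i %% 2 ^ (r - k - delta k))) ?modn_summ //.
move=> x _.
exact: modn_dvdm.
Qed.

Lemma inc_lc : r_incident (lc_set g A) r S'.
Proof.
move=> k kr K KS cK.
rewrite (@sum_supp _ (fun u => [forall v in K, g v u])); first exact: inc_g.
move=> u /S'_supp uS; apply/forallP/forallP => H v; move: (H v);
by rewrite lcE.
Qed.

Lemma S'_good u : 0 < S' u -> good u.
Proof. by rewrite /S'; case: (good u). Qed.

Lemma oddsum (P : pred T) (F : T -> nat) :
  odd (\sum_(i | P i) F i) = odd (\sum_(i | P i) odd (F i)).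
Proof.
suff h : (\sum_(i | P i) F i) %% 2 = (\sum_(i | P i) odd (F i)) %% 2.
  by move: h; rewrite !modn2; case: odd; case: odd.
rewrite -[LHS]modn_summ -[RHS]modn_summ.
by congr (_ %% 2); apply: eq_bigr => i _; rewrite modn2 [RHS]modn2 oddb.
Qed.

Lemma main_sec :
  exists (S' : T -> nat) (A : {set T}),
    [/\ independent_ms g S', r_incident g r S',
        independent_ms (lc_set g A) S', r_incident (lc_set g A) r S'
      & independent g A] /\
    [/\
        (forall u v, u \in supp S' -> v \in supp S' -> u != v -> ~~ twins g u v),
        (forall u, u \in supp S' -> 2 <= degree g u),
        (forall u, S' u < 2 ^ r.-1)
      & rlc g r S =2 rlc (lc_set g A) r S'].
Proof.
exists S', A; split; split.
- apply/forallP => u; apply/implyP => uS; apply/forallP => v; apply/implyP => vS.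
  by rewrite !inE in uS vS; rewrite (indepP (S'_supp uS) (S'_supp vS)).
- exact: inc_g.
- apply/forallP => u; apply/implyP => uS; apply/forallP => v; apply/implyP => vS.
  rewrite !inE in uS vS; rewrite lcE; last exact: S'_supp.
  by rewrite (indepP (S'_supp uS) (S'_supp vS)).
- exact: inc_lc.
- apply/forallP => u; apply/implyP => uS; apply/forallP => v; apply/implyP => vS.
  by rewrite (indepP (AS uS) (AS vS)).
- move=> u v; rewrite !inE => uS vS nuv.
  have uS0 := S'_supp uS; have vS0 := S'_supp vS.
  apply/negP; rewrite /twins => /eqP Htw.
  have E1 : N u :\ v = N u.
    apply/setP => x; rewrite in_setD1; case: eqVneq => [->|] //=.
    by rewrite /neighbors inE indepP.
  have E2 : N v :\ u = N v.
    apply/setP => x; rewrite in_setD1; case: eqVneq => [->|] //=.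
    by rewrite /neighbors inE indepP.
  rewrite E1 E2 in Htw.
  move: (S'_good uS) (S'_good vS) => /andP[/andP[_ Ru] _] /andP[/andP[_ Rv] _].
  move: Ru Rv nuv; rewrite Htw => /eqP -> /eqP.
  by case=> ->; move/eqP.
- by move=> u; rewrite inE => /S'_good /andP[_ ->].
- move=> u; rewrite /S'; case: (good u); last exact: mm_gt0.
  exact: ltn_pmod mm_gt0.
move=> a b; rewrite /rlc; have [->|nab] := eqVneq a b; first by [].
rewrite /=.
set K := [set a; b].
have eK : forall u, (g a u && g b u) = (K \subset N u).
  by move=> u; rewrite subUset !sub1set -!gN.
have cK : #|K| = 2 by rewrite cards2 nab.
have degC : forall u, K \subset N u -> 1 < degree g u.
  by move=> u; apply: degK; rewrite cK.
have NC : forall u w, N u = N w -> (K \subset N u) = (K \subset N w).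
  by move=> u w; exact: CK_N.
rewrite (eq_bigl _ _ eK) group //.
rewrite (@sum_supp _ (fun u => K \subset N u)); last first.
  by move=> u /S'_supp uS; rewrite !lcE // eK.
rewrite S'_sum //.
rewrite /lc_set (@foldl_lc1 _ (supp S)) //; last 2 first.
- exact: indepP.
- by apply/allP => z; rewrite mem_enum => /AS.
rewrite nab andbT.
have ec : count (fun u => g u a && g u b) (enum A) =
    \sum_(x | (K \subset N x) && isrep x) odd (Tw x %/ mm).
  rewrite -sum1_count big_enum_cond big_mkcond [RHS]big_mkcond.
  apply: eq_bigr => u _.
  rewrite inE /good (gsym u a) (gsym u b) eK.
  case KN: (K \subset N u); last by rewrite !andbF.
  by rewrite degC // andbT andbT; case: (isrep u); case: odd.
set X := \sum_(x | (K \subset N x) && isrep x) Tw x.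
set X' := \sum_(x | (K \subset N x) && isrep x) (Tw x %% mm).
set Q := \sum_(x | (K \subset N x) && isrep x) (Tw x %/ mm).
have eX : X = Q * mm + X'.
  by rewrite /X /Q /X' big_distrl -big_split; apply: eq_bigr => x _; exact: divn_eq.
have dX : mm %| X.
  case: (boolP ((a \in supp S) || (b \in supp S))) => [Hab|Hab].
    rewrite /X -group // big1 ?dvdn0 // => u KN.
    case: (posnP (S u)) => [->|h] //; exfalso.
    have uS : u \in supp S by rewrite inE.
    have aN : a \in N u by apply: (subsetP KN); rewrite !inE eqxx.
    have bN : b \in N u by apply: (subsetP KN); rewrite !inE eqxx orbT.
    rewrite /neighbors !inE in aN bN.
    by case/orP: Hab => xS; [rewrite (indepP uS xS) in aN | rewrite (indepP uS xS) in bN].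
  have KS0 : K \subset ~: supp S.
    by rewrite subUset !sub1set !in_setC -negb_or.
  have := Sinc (k := 0) r1 KS0 cK.
  rewrite (eq_bigl (fun u => K \subset N u)); last by move=> u; exact: CKe.
  by rewrite group // /delta /= subn0 subn1.
have dX' : mm %| X' by move: dX; rewrite eX dvdn_addr // dvdn_mull.
rewrite -[2 ^ r.-1]/mm L_mod // L_mod // eX divnMDl ?mm_gt0 // oddD ec -oddsum.
by rewrite addbA.
Qed.

End Main.

Theorem mainTheorem1 (T : finType) (g : rel T) (r : nat) (S : T -> nat) :
  symmetric g -> irreflexive g -> 1 <= r ->
  independent_ms g S -> r_incident g r S ->
  exists (S' : T -> nat) (A : {set T}),
    [/\ independent_ms g S', r_incident g r S',
        independent_ms (lc_set g A) S', r_incident (lc_set g A) r S'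
      & independent g A] /\
    [/\
        (forall u v, u \in supp S' -> v \in supp S' -> u != v -> ~~ twins g u v),
        (forall u, u \in supp S' -> 2 <= degree g u),
        (forall u, S' u < 2 ^ r.-1)
      & rlc g r S =2 rlc (lc_set g A) r S'].
Proof. by move=> *; apply: main_sec. Qed.
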